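(* Let $\mathbb{C}$ be a partial category. Then the family $\mathscr{N}$ of all morphisms $\mathrm{id}_A{\downarrow}U:U\to A$, for objects $U\le A$, is an inclusion system on $\mathbb{C}$.
   Context: Composition is diagrammatic. A partial category is a category with a partial order $\le$ on objects, a restriction operator $(U\le A,\ f:A\to B)\mapsto f{\downarrow}U:U\to B$, and a contraction operator $(V\le B,\ f:A\to B)\mapsto$ an object $A{\uparrow}_fV\le A$ and a morphism $f{\uparrow}V:A{\uparrow}_fV\to V$, satisfying: (P.1) $f{\downarrow}A=f$; (P.2) $(f{\downarrow}U){\downarrow}V=f{\downarrow}V$ for $V\le U\le A$; (P.3) $(f{\downarrow}U)g=(fg){\downarrow}U$; (P.4) $A{\uparrow}_fB=A$, $f{\uparrow}B=f$; (P.4') $A{\uparrow}_{\mathrm{id}_A}U=U$, $\mathrm{id}_A{\uparrow}U=\mathrm{id}_U$ for $U\le A$; (P.5) for $W\le V\le B$: $(A{\uparrow}_fV){\uparrow}_{f{\uparrow}V}W=A{\uparrow}_fW$ and $(f{\uparrow}V){\uparrow}W=f{\uparrow}W$; (P.6) for $g:B\to C$, $W\le C$: $A{\uparrow}_f(B{\uparrow}_gW)=A{\uparrow}_{fg}W$ and $(f{\uparrow}(B{\uparrow}_gW))(g{\uparrow}W)=(fg){\uparrow}W$; (P.7) $(A{\uparrow}_fV){\uparrow}_{f{\downarrow}(A{\uparrow}_fV)}V=A{\uparrow}_fV$ and $(f{\downarrow}(A{\uparrow}_fV)){\uparrow}V=f{\uparrow}V$; (P.8) $(fg){\downarrow}(A{\uparrow}_fV)=(f{\uparrow}V)(g{\downarrow}V)$.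 An inclusion system on a category is a family $\mathscr{N}$ of morphisms such that (I.1) identities belong to $\mathscr{N}$; (I.2) every member of $\mathscr{N}$ is monic; (I.3) any two parallel members of $\mathscr{N}$ are equal; (I.4) $\mathscr{N}$ is closed under composition; (I.5) for every $m:A\to B$ in $\mathscr{N}$ and every $f:C\to B$, a pullback of $m$ along $f$ exists and its leg $m':D\to C$ belongs to $\mathscr{N}$. *)

(* Defs.v *)
(* Composition is diagrammatic: comp f g : A -> C for f : A -> B, g : B -> C. *)
Set Implicit Arguments.
Unset Strict Implicit.

Record Category := {
  Obj : Type;
  Hom : Obj -> Obj -> Type;
  idm : forall A, Hom A A;
  comp : forall A B C, Hom A B -> Hom B C -> Hom A C;
  comp_id_l : forall A B (f : Hom A B), comp (idm A) f = f;
  comp_id_r : forall A B (f : Hom A B), comp f (idm B) = f;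
  comp_assoc : forall A B C D (f : Hom A B) (g : Hom B C) (h : Hom C D),
      comp (comp f g) h = comp f (comp g h)
}.

Arguments idm {c} A.
Arguments comp {c A B C} f g.

(* A morphism packed with its domain and codomain; equality of packed
   morphisms expresses equality of morphisms whose (co)domains are only
   propositionally equal (e.g. "f ↑ B = f" in (P.4)). *)
Definition arr (C : Category) := { AB : Obj C * Obj C & Hom (fst AB) (snd AB) }.
Definition pack {C : Category} {A B : Obj C} (f : Hom A B) : arr C :=
  existT (fun AB : Obj C * Obj C => Hom (fst AB) (snd AB)) (A, B) f.

Record PartialCategory := {
  cat :> Category;
  ple : Obj cat -> Obj cat -> Prop;
  ple_refl : forall A, ple A A;
  ple_trans : forall A B D, ple A B -> ple B D -> ple A D;
  ple_antisym : forall A B, ple A B -> ple B A -> A = B;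
  res : forall (A B U : Obj cat), ple U A -> Hom A B -> Hom U B;
  (* contraction: object A↑_f V ≤ A and morphism f↑V : A↑_f V -> V *)
  cobj : forall (A B V : Obj cat), ple V B -> Hom A B -> Obj cat;
  cobj_le : forall A B V (h : ple V B) (f : Hom A B), ple (cobj h f) A;
  cmor : forall A B V (h : ple V B) (f : Hom A B), Hom (cobj h f) V;
  P1 : forall A B (h : ple A A) (f : Hom A B), res h f = f;
  P2 : forall A B U V (hUA : ple U A) (hVU : ple V U) (hVA : ple V A)
         (f : Hom A B), res hVU (res hUA f) = res hVA f;
  P3 : forall A B D U (h : ple U A) (f : Hom A B) (g : Hom B D),
         comp (res h f) g = res h (comp f g);
  P4_obj : forall A B (h : ple B B) (f : Hom A B), cobj h f = A;
  P4_mor : forall A B (h : ple B B) (f : Hom A B), pack (cmor h f) = pack f;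
  P4'_obj : forall A U (h : ple U A), cobj h (idm A) = U;
  P4'_mor : forall A U (h : ple U A), pack (cmor h (idm A)) = pack (idm U);
  P5_obj : forall A B V W (hVB : ple V B) (hWV : ple W V) (hWB : ple W B)
             (f : Hom A B), cobj hWV (cmor hVB f) = cobj hWB f;
  P5_mor : forall A B V W (hVB : ple V B) (hWV : ple W V) (hWB : ple W B)
             (f : Hom A B), pack (cmor hWV (cmor hVB f)) = pack (cmor hWB f);
  P6_obj : forall A B D W (hWD : ple W D) (f : Hom A B) (g : Hom B D),
             cobj (cobj_le hWD g) f = cobj hWD (comp f g);
  P6_mor : forall A B D W (hWD : ple W D) (f : Hom A B) (g : Hom B D),
             pack (comp (cmor (cobj_le hWD g) f) (cmor hWD g))
             = pack (cmor hWD (comp f g));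
  P7_obj : forall A B V (hVB : ple V B) (f : Hom A B),
             cobj hVB (res (cobj_le hVB f) f) = cobj hVB f;
  P7_mor : forall A B V (hVB : ple V B) (f : Hom A B),
             pack (cmor hVB (res (cobj_le hVB f) f)) = pack (cmor hVB f);
  P8 : forall A B D V (hVB : ple V B) (f : Hom A B) (g : Hom B D),
             res (cobj_le hVB f) (comp f g) = comp (cmor hVB f) (res hVB g)
}.

Arguments ple {p} A B.
Arguments res {p A B U} h f.
Arguments cobj {p A B V} h f.
Arguments cmor {p A B V} h f.

Definition morph_family (C : Category) := forall A B : Obj C, Hom A B -> Prop.

Definition monic {C : Category} {A B : Obj C} (m : Hom A B) : Prop :=
  forall (E : Obj C) (x y : Hom E A), comp x m = comp y m -> x = y.

Definition is_pullback {C : Category} {A B X D : Obj C}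
    (m : Hom A B) (f : Hom X B) (m' : Hom D X) (f' : Hom D A) : Prop :=
  comp m' f = comp f' m /\
  forall (E : Obj C) (x : Hom E X) (y : Hom E A), comp x f = comp y m ->
    exists u : Hom E D, (comp u m' = x /\ comp u f' = y) /\
      forall v : Hom E D, comp v m' = x /\ comp v f' = y -> v = u.

Definition inclusion_system (C : Category) (N : morph_family C) : Prop :=
  (forall A, N A A (idm A)) /\
  (forall A B (m : Hom A B), N A B m -> monic m) /\
  (forall A B (m n : Hom A B), N A B m -> N A B n -> m = n) /\
  (forall A B D (m : Hom A B) (n : Hom B D),
                 N A B m -> N B D n -> N A D (comp m n)) /\
  (forall A B X (m : Hom A B) (f : Hom X B), N A B m ->
                 exists (D : Obj C) (m' : Hom D X) (f' : Hom D A),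
                   is_pullback m f m' f' /\ N D X m').

Definition res_id_family (P : PartialCategory) : morph_family P :=
  fun U A m => exists h : ple U A, m = res h (idm A).
Arguments res_id_family P : clear implicits.

(* Main.v *)
Require Import Defs.
From Stdlib Require Import ProofIrrelevance Eqdep.
Set Implicit Arguments.

Section S.
Variable P : PartialCategory.

Lemma pack_eq (A B : Obj P) (f g : Hom A B) : pack f = pack g -> f = g.
Proof. unfold pack; intro H. exact (Eqdep.EqdepTheory.inj_pair2 _ _ _ _ _ H). Qed.

Lemma resid_comp (A B U : Obj P) (h : ple U A) (f : Hom A B) :
  comp (res h (idm A)) f = res h f.
Proof. rewrite P3, comp_id_l. reflexivity. Qed.

Lemma Lid (A U : Obj P) (h h' : ple U A) :
  cobj h (res h' (idm A)) = U /\ pack (cmor h (res h' (idm A))) = pack (idm U).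
Proof.
  assert (E := P4'_obj h). assert (M := P4'_mor h).
  assert (O := P7_obj h (idm A)). assert (MM := P7_mor h (idm A)).
  rewrite M in MM.
  revert E M O MM.
  generalize (cobj_le h (idm A)) as hW.
  generalize (cmor h (idm A)) as c.
  generalize (cobj h (idm A)) as W.
  intros W c hW E M O MM. subst W.
  rewrite (proof_irrelevance _ hW h') in O, MM. auto.
Qed.

Lemma Qlem (A U E : Obj P) (h h' : ple U A) (y : Hom E U) :
  cobj h (comp y (res h' (idm A))) = E /\
  pack (cmor h (comp y (res h' (idm A)))) = pack y.
Proof.
  rewrite (proof_irrelevance _ h' h).
  destruct (Lid _ _ h h) as [L1 L2].
  split.
  - rewrite <- (P6_obj h y (res h (idm A))).
    revert L1 L2.
    generalize (cobj_le h (res h (idm A))) as hK.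
    generalize (cmor h (res h (idm A))) as c.
    generalize (cobj h (res h (idm A))) as K.
    intros K c hK L1 L2. subst K. apply P4_obj.
  - rewrite <- (P6_mor h y (res h (idm A))).
    revert L1 L2.
    generalize (cobj_le h (res h (idm A))) as hK.
    generalize (cmor h (res h (idm A))) as c.
    generalize (cobj h (res h (idm A))) as K.
    intros K c hK L1 L2. subst K. apply pack_eq in L2. subst c.
    rewrite comp_id_r. apply P4_mor.
Qed.

Lemma monic_res (A U : Obj P) (h : ple U A) : monic (res h (idm A)).
Proof.
  intros E x y H.
  destruct (Qlem _ _ _ h h x) as [_ Hx]. destruct (Qlem _ _ _ h h y) as [_ Hy].
  rewrite H in Hx. rewrite Hx in Hy. apply pack_eq. exact Hy.
Qed.

End S.

Theorem proposition11p12 (P : PartialCategory) :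
  inclusion_system (res_id_family P).
Proof.
  unfold inclusion_system, res_id_family.
  split; [|split; [|split; [|split]]].
  - intro A. exists (ple_refl A). symmetry. apply P1.
  - intros A B m [h ->]. apply (monic_res _ _ _ h).
  - intros A B m n [h ->] [h' ->]. rewrite (proof_irrelevance _ h h'). reflexivity.
  - intros A B D m n [h1 ->] [h2 ->].
    exists (ple_trans h1 h2). rewrite P3, comp_id_l. apply P2.
  - intros A B X m f [h ->].
    exists (cobj h f), (res (cobj_le h f) (idm X)), (cmor h f).
    split; [| exists (cobj_le h f); reflexivity].
    split.
    + rewrite resid_comp, <- P8, comp_id_r. reflexivity.
    + intros E x y Hc.
      set (hD := cobj_le h f).
      assert (Hex : exists u : Hom E (cobj h f),
                 comp u (res hD (idm X)) = x /\ comp u (cmor h f) = y).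
      { assert (Ha : comp (cmor hD x) (res hD (idm X)) = res (cobj_le hD x) x).
        { rewrite <- P8, comp_id_r. reflexivity. }
        assert (Hb : pack (comp (cmor hD x) (cmor h f)) = pack y).
        { unfold hD. rewrite P6_mor. rewrite Hc. apply (proj2 (Qlem _ _ _ _ h h y)). }
        assert (He : cobj hD x = E).
        { unfold hD. rewrite P6_obj, Hc. apply (proj1 (Qlem _ _ _ _ h h y)). }
        revert Ha Hb He.
        generalize (cobj_le hD x) as hZ.
        generalize (cmor hD x) as c.
        generalize (cobj hD x) as Z.
        intros Z c hZ Ha Hb He. subst Z.
        exists c. split.
        - rewrite Ha. apply P1.
        - apply pack_eq. exact Hb. }
      destruct Hex as [u [Hu1 Hu2]].
      exists u. split; [split; assumption|].
      intros v [Hv1 Hv2]. apply (monic_res _ _ _ hD). congruence.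
Qed.
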